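(* Let $m,n$ be positive integers and for each $i\in\{1,\dots,m\}$ let $A^i\in\mathbb{R}^{n_i\times n}$. Let $A=[(A^1)^T,\dots,(A^m)^T]^T\in\mathbb{R}^{N\times n}$ with $N=\sum_i n_i\ge n$, and assume $A^TA$ is full rank. Let $\lambda$ and $\gamma$ denote the largest and smallest eigenvalues of $A^TA$, respectively. Fix $\beta>0$, let $K^*=(A^TA+\beta I)^{-1}$ with $j$-th column $k_j^*$, and let $e_j$ be the $j$-th column of the $n\times n$ identity matrix $I$. Let $K(-1)\in\mathbb{R}^{n\times n}$ be arbitrary, with columns $k_j(-1)$, and for $t=0,1,2,\dots$ define the columns of $K(t)$ by $$k_j(t)=k_j(t-1)-\alpha\sum_{i=1}^m R^i_j(t-1),\qquad R^i_j(s)=\Big((A^i)^TA^i+\tfrac{\beta}{m}I\Big)k_j(s)-\tfrac{1}{m}e_j,\quad j=1,\dots,n,$$ where $\alpha>0$ is a parameter. Define $\rho_K^*=\dfrac{\lambda-\gamma}{\lambda+\gamma+2\beta}$. Then there exists $\alpha>0$ for which there is a positive value $\rho_K<1$ such that for each $j=1,\dots,n$, $$\|k_j(t)-k_j^*\|\le\rho_K\|k_j(t-1)-k_j^*\|,\qquad t=0,1,2,\dots,$$ where $\rho_K\ge\rho_K^*$.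
   Context: $\|\cdot\|$ denotes the Euclidean 2-norm. This iteration is the pre-conditioner update of a distributed (server-based) algorithm for the least-squares problem $\min_x\sum_{i=1}^m\frac12\|A^ix-b^i\|^2$. *)

(* Defs.v *)
From HB Require Import structures.
From mathcomp Require Import all_boot all_order all_algebra.
Set Implicit Arguments. Unset Strict Implicit. Unset Printing Implicit Defensive.
Import Order.TTheory GRing.Theory Num.Theory.
Local Open Scope ring_scope.

Section Defs.
Variable R : rcfType.

Definition norm2 (n : nat) (v : 'cV[R]_n) : R :=
  Num.sqrt (\sum_(r < n) v r 0 ^+ 2).

Definition stackA (m n : nat) (ni : 'I_m -> nat) (Ai : forall i : 'I_m, 'M[R]_(ni i, n))
  : 'M[R]_(\sum_(i < m) ni i, n) := \mxcol_(i < m) Ai i.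

Definition Rij (m n : nat) (ni : 'I_m -> nat) (Ai : forall i : 'I_m, 'M[R]_(ni i, n))
  (beta : R) (Ks : 'M[R]_n) (i : 'I_m) (j : 'I_n) : 'cV[R]_n :=
  ((Ai i)^T *m Ai i + (beta / m%:R)%:M) *m col j Ks - m%:R^-1 *: col j (1%:M : 'M[R]_n).

(* Kseq ... Km1 t  =  K(t-1); i.e. Kseq 0 = K(-1), Kseq (t+1) = K(t). *)
Fixpoint Kseq (m n : nat) (ni : 'I_m -> nat) (Ai : forall i : 'I_m, 'M[R]_(ni i, n))
  (beta alpha : R) (Km1 : 'M[R]_n) (t : nat) : 'M[R]_n :=
  match t with
  | 0 => Km1
  | t'.+1 =>
      let Kp := Kseq Ai beta alpha Km1 t' in
      \matrix_(r < n, j < n)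
        (col j Kp - alpha *: \sum_(i < m) Rij Ai beta Kp i j) r 0
  end.
End Defs.

(* Main.v *)
Require Import Defs.
From HB Require Import structures.
From mathcomp Require Import all_boot all_order all_algebra.
From mathcomp Require Import ring lra.
Import Order.TTheory GRing.Theory Num.Theory.
Local Open Scope ring_scope.

Set Implicit Arguments. Unset Strict Implicit.
Section H.
Variable R : rcfType.

Definition dot (n : nat) (u w : 'cV[R]_n) := \sum_(r < n) u r 0 * w r 0.
Arguments dot {n}.

Lemma dotE n (u w : 'cV[R]_n) : (u^T *m w) 0 0 = dot u w.
Proof. rewrite !mxE; apply: eq_bigr => r _; by rewrite !mxE. Qed.

Lemma dot_ge0 n (u : 'cV[R]_n) : 0 <= dot u u.
Proof. apply: sumr_ge0 => r _; rewrite -expr2; exact: sqr_ge0. Qed.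

Lemma norm2E n (u : 'cV[R]_n) : norm2 u = Num.sqrt (dot u u).
Proof. by rewrite /norm2 /dot; congr Num.sqrt; apply: eq_bigr => r _; rewrite expr2. Qed.

Lemma dotDr n (u v w : 'cV[R]_n) : dot u (v + w) = dot u v + dot u w.
Proof. rewrite /dot -big_split; apply: eq_bigr => r _; rewrite !mxE /=; ring. Qed.

Lemma dotZr n a (u v : 'cV[R]_n) : dot u (a *: v) = a * dot u v.
Proof. rewrite /dot mulr_sumr; apply: eq_bigr => r _; rewrite !mxE /=; ring. Qed.

Lemma dot_sub n (u w : 'cV[R]_n) a :
  dot (u - a *: w) (u - a *: w) = dot u u - 2 * a * dot u w + a ^+ 2 * dot w w.
Proof.
rewrite /dot !mulr_sumr -sumrB -big_split; apply: eq_bigr => r _; rewrite !mxE /=; ring.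
Qed.

Lemma dot0 n (u : 'cV[R]_n) : dot u u = 0 -> u = 0.
Proof.
move=> H; apply/matrixP => r c; rewrite ord1 [RHS]mxE.
have hp : forall i : 'I_n, xpredT i -> 0 <= u i 0 * u i 0.
  by move=> i _; rewrite -expr2 sqr_ge0.
have := @psumr_eq0P _ _ xpredT (fun i => u i 0 * u i 0) hp H r isT.
by move/eqP; rewrite mulf_eq0 orbb; move/eqP.
Qed.

Lemma PSD k n (A : 'M[R]_(k, n)) (v : 'cV[R]_n) :
  dot v ((A^T *m A) *m v) = dot (A *m v) (A *m v).
Proof. by rewrite -!dotE trmx_mul !mulmxA. Qed.

Lemma Hbound n (H : 'M[R]_n) :
  exists2 C, 0 <= C & forall v, dot (H *m v) (H *m v) <= C * dot v v.
Proof.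
exists (\sum_(r < n) (\sum_(c < n) `|H r c|) ^+ 2).
  by apply: sumr_ge0 => r _; apply: sqr_ge0.
move=> v; set s := Num.sqrt (dot v v).
have hv c : `|v c 0| <= s.
  rewrite -sqrtr_sqr ler_wsqrtr // /dot (bigD1 c) //= -expr2 lerDl.
  by apply: sumr_ge0 => i _; rewrite -expr2 sqr_ge0.
have hr r : `|(H *m v) r 0| <= (\sum_(c < n) `|H r c|) * s.
  rewrite mxE; apply: le_trans (ler_norm_sum _ _ _) _; rewrite mulr_suml.
  by apply: ler_sum => c _; rewrite normrM ler_wpM2l.
rewrite [X in X <= _]/dot mulr_suml; apply: ler_sum => r _.
rewrite -(sqr_sqrtr (dot_ge0 v)) -/s.
have h1 : `|(H *m v) r 0| ^+ 2 = (H *m v) r 0 * (H *m v) r 0 by rewrite real_normK ?num_real // expr2.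
rewrite -h1; have := hr r; have := normr_ge0 ((H *m v) r 0).
set a := `|_|; set S := \sum_(c < n) _ => ha hab.
have hs : 0 <= s by apply: sqrtr_ge0.
nra.
Qed.

End H.
Unset Implicit Arguments.

Theorem lemma1 (R : rcfType) (m n : nat) (ni : 'I_m -> nat)
  (Ai : forall i : 'I_m, 'M[R]_(ni i, n))
  (lam gam beta : R) (Km1 : 'M[R]_n) :
  (0 < m)%N -> (0 < n)%N ->
  (n <= \sum_(i < m) ni i)%N ->
  \rank ((stackA Ai)^T *m stackA Ai) = n ->
  eigenvalue ((stackA Ai)^T *m stackA Ai) lam ->
  eigenvalue ((stackA Ai)^T *m stackA Ai) gam ->
  (forall mu, eigenvalue ((stackA Ai)^T *m stackA Ai) mu -> gam <= mu <= lam) ->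
  0 < beta ->
  let Kstar := invmx ((stackA Ai)^T *m stackA Ai + beta%:M) in
  let rhoKstar := (lam - gam) / (lam + gam + 2 * beta) in
  exists alpha : R, 0 < alpha /\
    exists rhoK : R, [/\ 0 < rhoK, rhoK < 1, rhoKstar <= rhoK &
      forall (j : 'I_n) (t : nat),
        norm2 (col j (Kseq Ai beta alpha Km1 t.+1) - col j Kstar)
        <= rhoK * norm2 (col j (Kseq Ai beta alpha Km1 t) - col j Kstar)].
Proof.
move=> m0 n0 _ _ elam egam hmu hb Kstar rhoKstar.
set A := stackA Ai.
set M := A^T *m A.
have HM : M = \sum_i (Ai i)^T *m Ai i by rewrite /M /A /stackA tr_mxcol mul_mxrow_mxcol.
set H := M + beta%:M.
have HvE (v : 'cV[R]_n) : H *m v = M *m v + beta *: v by rewrite mulmxDl mul_scalar_mx.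
have hdotH (v : 'cV[R]_n) : beta * dot v v <= dot v (H *m v).
  rewrite HvE dotDr dotZr /M PSD; have := dot_ge0 (A *m v); lra.
have Hunit : H \in unitmx.
  rewrite unitmxE unitfE; apply/det0P => -[v vn0 vH].
  have := hdotH v^T; rewrite -[dot v^T (H *m _)]dotE trmxK mulmxA vH mul0mx mxE.
  rewrite pmulr_rle0 // => hq.
  have : dot v^T v^T = 0 by apply/le_anti; rewrite hq dot_ge0.
  move/dot0 => /(congr1 trmx); rewrite trmxK trmx0 => hv0.
  by move: vn0; rewrite hv0 eqxx.
have gam0 : 0 <= gam.
  case/eigenvalueP: egam => v Hv vn0.
  have := PSD A v^T; rewrite -/M -[dot v^T (M *m _)]dotE trmxK mulmxA Hv -scalemxAl mxE => E.
  have hq : 0 < (v *m v^T) 0 0.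
    rewrite -{1}(trmxK v) dotE.
    rewrite lt_def dot_ge0 andbT; apply/eqP => /dot0 /(congr1 trmx).
    by rewrite trmxK trmx0 => hv0; move: vn0; rewrite hv0 eqxx.
  by rewrite -(pmulr_lge0 _ hq) E dot_ge0.
have lamgam : gam <= lam by case/andP: (hmu _ egam).
have [C C0 hC] := Hbound H.
set C' := C + beta ^+ 2 + 1.
have C'0 : 0 < C' by rewrite /C'; have := sqr_ge0 beta; lra.
set alpha := beta / C'.
have ha : 0 < alpha by rewrite /alpha divr_gt0.
have haC : alpha * C' = beta by rewrite /alpha divfK // gt_eqF.
set r2 := 1 - alpha * beta.
have hab : 0 < alpha * beta by rewrite mulr_gt0.
have hab1 : alpha * beta < 1.
  rewrite /alpha mulrAC ltr_pdivrMr // mul1r /C' expr2; have := C0; lra.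
have r20 : 0 < r2 by rewrite /r2; lra.
have r21 : r2 < 1 by rewrite /r2; lra.
have sr0 : 0 < Num.sqrt r2 by rewrite sqrtr_gt0.
have sr1 : Num.sqrt r2 < 1 by rewrite -(sqrtr1 R) ltr_sqrt // ltr01.
have rs1 : rhoKstar < 1.
  rewrite /rhoKstar ltr_pdivrMr; last by lra.
  lra.
exists alpha; split => //.
exists (Num.max rhoKstar (Num.sqrt r2)); split.
- by rewrite lt_max sr0 orbT.
- by rewrite gt_max rs1 sr1.
- by rewrite le_max lexx.
move=> j t.
have step : col j (Kseq Ai beta alpha Km1 t.+1) - col j Kstar =
   (col j (Kseq Ai beta alpha Km1 t) - col j Kstar) -
   alpha *: (H *m (col j (Kseq Ai beta alpha Km1 t) - col j Kstar)).
  set Kp := Kseq Ai beta alpha Km1 t.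
  have E : col j (Kseq Ai beta alpha Km1 t.+1) =
      col j Kp - alpha *: \sum_i Rij Ai beta Kp i j.
    by apply/matrixP => r c; rewrite ord1 !mxE.
  have S : \sum_i Rij Ai beta Kp i j = H *m col j Kp - col j 1%:M.
    rewrite /Rij sumrB.
    under eq_bigr do rewrite mulmxDl mul_scalar_mx.
    have hm : m%:R != 0 :> R by rewrite pnatr_eq0 -lt0n.
    rewrite big_split -mulmx_suml -HM !sumr_const card_ord !scalerMnl.
    rewrite -(mulr_natr (m%:R^-1)) -(mulr_natr (beta / m%:R)) mulVf // divfK //.
    by rewrite scale1r HvE.
  have HK : H *m col j Kstar = col j 1%:M by rewrite !colE mulmxA mulmxV.
  rewrite E S mulmxBr HK; exact: addrAC.
rewrite step !norm2E dot_sub.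
set d := col j _ - col j _.
have h1 := hdotH d.
have h2 := hC d.
have hq := dot_ge0 d.
have key : dot d d - 2 * alpha * dot d (H *m d) + alpha ^+ 2 * dot (H *m d) (H *m d)
    <= r2 * dot d d.
  have e1 : alpha * (beta * dot d d) <= alpha * dot d (H *m d) by rewrite ler_wpM2l // ltW.
  have e2 : alpha ^+ 2 * dot (H *m d) (H *m d) <= alpha ^+ 2 * (C' * dot d d).
    rewrite ler_wpM2l ?sqr_ge0 //; apply: le_trans h2 _; apply: (ler_wpM2r hq); rewrite /C'.
    have := sqr_ge0 beta; lra.
  have e3 : alpha ^+ 2 * (C' * dot d d) = alpha * beta * dot d d.
    by rewrite -haC; ring.
  rewrite /r2; (timeout 20 nra).
apply: le_trans (ler_wsqrtr key) _.
rewrite (sqrtrM _ (ltW r20)); apply: (ler_wpM2r (sqrtr_ge0 _)).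
by rewrite le_max lexx orbT.
Qed.
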